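(* For every graph $H$ there exists a positive real number $c=c(H)$ such that the following holds. Let $Q$ be a quasi-order, let $f_H$ be a legal $Q$-labelling of $H$, let $\mathcal G$ be a hereditary class of legal $Q$-labelled graphs, and let $\mathcal H$ be a consistent set of homomorphisms from $(H,f_H)$ to $\mathcal G$. Then there are infinitely many positive integers $n$ such that $$\mathrm{ex}(H,f_H,\mathcal H,\mathcal G,n)\ \ge\ c\,n^{\mathrm{dup}_{\mathcal H}(H,f_H,\mathcal G)}.$$
   Context: All graphs are finite and simple. A separation of a graph $G$ is an ordered pair $(A,B)$ of subsets of $V(G)$ with $A\cup B=V(G)$ such that no edge of $G$ joins $A\setminus B$ and $B\setminus A$; its order is $|A\cap B|$. A collection $\mathcal C$ of separations of $G$ is independent if $A\setminus B\neq\emptyset$ for every $(A,B)\in\mathcal C$ and, for any distinct $(A,B),(C,D)\in\mathcal C$, $A\subseteq D$ and $C\subseteq B$. For $S\subseteq V(G)$, $N_G[S]$ is the set of vertices that are in $S$ or adjacent to a vertex of $S$. Labelled graphs. A march in $G$ is a finite sequence of pairwise distinct vertices of $G$. A labelling of $G$ is a function whose domain is a set of marches in $G$; it is legal if for every march in its domain, the entries form a clique of $G$. A quasi-order is a pair $Q=(X,\preceq)$ with $\preceq$ a reflexive and transitive relation on $X$. A $Q$-labelled graph is a pair $(G,f_G)$ where $f_G$ is a labelling of $G$ with image contained in $X$; it is legal if $f_G$ is legal. For a function $\phi$ and a march $m=(m_1,\dots,m_n)$, $\phi(m)=(\phi(m_1),\dots,\phi(m_n))$. An isomorphism from $(H,f_H)$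 to $(G,f_G)$ is a graph isomorphism $\phi:V(H)\to V(G)$ such that for each march $m$ in the domain of $f_H$, $\phi(m)$ is in the domain of $f_G$ and $f_H(m)=f_G(\phi(m))$, and for each march $m'$ in the domain of $f_G$, $\phi^{-1}(m')$ is in the domain of $f_H$. $(H,f_H)$ is an induced subgraph of $(G,f_G)$ if $H$ is an induced subgraph of $G$, the domain of $f_H$ is contained in that of $f_G$, and every march in the domain of $f_G$ with all entries in $V(H)$ is in the domain of $f_H$ and has the same value under $f_H$ and $f_G$. A class of $Q$-labelled graphs is hereditary if it contains every induced subgraph of each of its members. $(H',f_{H'})$ is a subgraph of $(G,f_G)$ if $H'$ is a subgraph of $G$, the domain of $f_{H'}$ is contained in that of $f_G$, and $f_{H'}(m)=f_G(m)$ for every $m$ in the domain of $f_{H'}$; it is spanning if moreover $V(H')=V(G)$. A homomorphism from a legal $Q$-labelled graph $(H,f_H)$ to a $Q$-labelled graph $(G,f_G)$ is a graph homomorphism $\phi:V(H)\to V(G)$ such that for every march $m$ in the domain of $f_H$, $\phi(m)$ is in the domain of $f_G$ and $f_H(m)\preceq f_G(\phi(m))$. A set of homomorphisms from $(H,f_H)$ to a class $\mathcal G$ is a set each of whose members is a homomorphism from $(H,f_H)$ to some member of $\mathcal G$ (each homomorphism being regarded as a function with specified codomain). Consistency. Let $\mathcal G$ be a hereditary class of legal $Q$-labelled graphs and $\mathcal H$ a set of homomorphisms from a legal $Q$-labelled graph $(H,f_H)$ to $\mathcal G$. $\mathcal H$ is consistent if: (CON1) for every $\phi\in\mathcal H$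 from $(H,f_H)$ to $(G,f)\in\mathcal G$: if $(G',f')$ is an induced subgraph of $(G,f)$ with $\phi(V(H))\subseteq V(G')$, then $\phi$ with codomain restricted to $V(G')$ is a homomorphism to $(G',f')$ belonging to $\mathcal H$; and if $(G,f)$ is an induced subgraph of some $(G',f')\in\mathcal G$, then $\phi$ with codomain changed to $V(G')$ is a homomorphism to $(G',f')$ belonging to $\mathcal H$; (CON2) if $\iota$ is an isomorphism from $(G_1,f_1)\in\mathcal G$ to $(G_2,f_2)\in\mathcal G$ and $\phi\in\mathcal H$ is a homomorphism to $(G_1,f_1)$, then $\iota\circ\phi\in\mathcal H$; (CON3) if $(G_1,f_1),(G_2,f_2)\in\mathcal G$, $\iota$ is an isomorphism from $(G_2,f_2)$ to a spanning subgraph $(G_1',f_1')$ of $(G_1,f_1)$, and $\phi\in\mathcal H$ is a homomorphism to $(G_1,f_1)$ that is also a homomorphism to $(G_1',f_1')$, then $\iota^{-1}\circ\phi$ is a homomorphism from $(H,f_H)$ to $(G_2,f_2)$ and belongs to $\mathcal H$. Counting. $\mathrm{ex}(H,f_H,\mathcal H,\mathcal G,n)$ is the maximum, over all $(G,f_G)\in\mathcal G$ with $|V(G)|=n$, of the number of members of $\mathcal H$ that are homomorphisms from $(H,f_H)$ to $(G,f_G)$. Duplication. For a labelled graph $(H,f_H)$, an independent collection $\mathcal L$ of separations of $H$ and a positive integer $w$, $(H,f_H)\wedge_w\mathcal L$ is the labelled graph $(G,f_G)$ obtained from $w$ disjoint isomorphic copies $(G_1,f_{G_1}),\dots,(G_w,f_{G_w})$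 of $(H,f_H)$ by identifying, for each $v\in\bigcap_{(A,B)\in\mathcal L}B$, the $w$ copies of $v$ into a single vertex $v^G$; the domain of $f_G$ consists exactly of the marches $m^G$, where $m$ is a march in the domain of some $f_{G_i}$ and $m^G$ is obtained from $m$ by replacing each entry that is a copy of such a $v$ by $v^G$, and $f_G(m^G)=f_{G_i}(m)$. $\mathcal L$ is $\mathcal G$-duplicable if $(H,f_H)\wedge_k\mathcal L\in\mathcal G$ for infinitely many positive integers $k$. $\mathcal L$ is $(\mathcal G,\mathcal H)$-duplicable if there exist a $Q$-labelled graph $(G,f_G)$ and an onto homomorphism $\phi\in\mathcal H$ from $(H,f_H)$ to $(G,f_G)$ such that $\phi(A\setminus B)\cap\phi(B)=\emptyset$ for every $(A,B)\in\mathcal L$, and $\{(N_G[\phi(A\setminus B)],V(G)\setminus\phi(A\setminus B)):(A,B)\in\mathcal L\}$ is a $\mathcal G$-duplicable independent collection of separations of $(G,f_G)$ of size $|\mathcal L|$. $\mathrm{dup}_{\mathcal H}(H,f_H,\mathcal G)$ is the maximum size of a $(\mathcal G,\mathcal H)$-duplicable independent collection of separations of $H$. *)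

(* Defs.v *)
From Stdlib Require Import Reals.
From mathcomp Require Import all_boot.
From mathcomp Require Import finmap.

Set Implicit Arguments.
Unset Strict Implicit.
Unset Printing Implicit Defensive.

Local Open Scope fset_scope.

Definition quasi_order (X : Type) (le : X -> X -> Prop) : Prop :=
  (forall x, le x x) /\ (forall x y z, le x y -> le y z -> le x z).

(* The fixed graph H: vertex set = the whole finite type VH,           *)
Definition simple_graph (VH : finType) (E : rel VH) : Prop :=
  symmetric E /\ irreflexive E.

(* A labelling of H is a partial function on sequences of vertices;   *)
(* its domain {m | fH m <> None} must consist of marches (sequences of *)
(* pairwise distinct vertices); legal = every march in the domain is a *)
(* clique.                                                            *)
Definition legal_H_labelling (VH : finType) (E : rel VH) (X : Type)
  (fH : seq VH -> option X) : Prop :=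
  forall m, fH m <> None ->
    uniq m /\ (forall x y, x \in m -> y \in m -> x != y -> E x y).

Record lgraph (V : choiceType) (X : Type) := LGraph {
  lverts : {fset V};
  ladj : rel V;
  llab : seq V -> option X }.

Definition wf_lgraph (V : choiceType) (X : Type) (G : lgraph V X) : Prop :=
  [/\ symmetric (ladj G), irreflexive (ladj G),
      (forall x y, ladj G x y -> (x \in lverts G) && (y \in lverts G)) &
      (forall m, llab G m <> None ->
         uniq m /\ all (fun x => x \in lverts G) m)].

Definition legal_lgraph (V : choiceType) (X : Type) (G : lgraph V X) : Prop :=
  forall m, llab G m <> None ->
    forall x y, x \in m -> y \in m -> x != y -> ladj G x y.

Definition induced (V : choiceType) (X : Type) (G' G : lgraph V X) : Prop :=
  [/\ lverts G' `<=` lverts G,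
      (forall x y, x \in lverts G' -> y \in lverts G' ->
         ladj G' x y = ladj G x y),
      (forall m, llab G' m <> None -> llab G m <> None) &
      (forall m, all (fun x => x \in lverts G') m -> llab G m <> None ->
         llab G' m = llab G m)].

Definition subgraph (V : choiceType) (X : Type) (G' G : lgraph V X) : Prop :=
  [/\ lverts G' `<=` lverts G,
      (forall x y, ladj G' x y -> ladj G x y) &
      (forall m, llab G' m <> None -> llab G m = llab G' m)].

Definition spanning_subgraph (V : choiceType) (X : Type) (G' G : lgraph V X)
  : Prop := subgraph G' G /\ lverts G' = lverts G.

Definition is_iso (V1 V2 : choiceType) (X : Type)
  (G1 : lgraph V1 X) (G2 : lgraph V2 X) (iota : V1 -> V2) : Prop :=
  [/\ {in lverts G1 &, injective iota},
      (forall x, x \in lverts G1 -> iota x \in lverts G2),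
      (forall y, y \in lverts G2 -> exists2 x, x \in lverts G1 & iota x = y),
      (forall x y, x \in lverts G1 -> y \in lverts G1 ->
         ladj G2 (iota x) (iota y) = ladj G1 x y) &
      ((forall m, llab G1 m <> None -> llab G2 (map iota m) = llab G1 m) /\
       (forall m', llab G2 m' <> None ->
          exists m, [/\ all (fun x => x \in lverts G1) m, map iota m = m'
                      & llab G1 m <> None]))].

Definition is_hom (VH : finType) (E : rel VH) (X : Type)
  (le : X -> X -> Prop) (fH : seq VH -> option X)
  (V : choiceType) (G : lgraph V X) (phi : {ffun VH -> V}) : Prop :=
  [/\ (forall x, phi x \in lverts G),
      (forall x y, E x y -> ladj G (phi x) (phi y)) &
      (forall m a, fH m = Some a ->
         exists2 b, llab G (map phi m) = Some b & le a b)].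

Definition hereditary_class (V : choiceType) (X : Type)
  (GG : lgraph V X -> Prop) : Prop :=
  (forall G, GG G -> wf_lgraph G /\ legal_lgraph G) /\
  (forall G G', GG G -> wf_lgraph G' -> induced G' G -> GG G').

(* A set HH of homomorphisms from (H,fH) to the class GG: HH G phi     *)
(* means "phi, regarded as a map with codomain (G,f), belongs to HH". *)
Definition hom_set (VH : finType) (E : rel VH) (X : Type)
  (le : X -> X -> Prop) (fH : seq VH -> option X) (V : choiceType)
  (GG : lgraph V X -> Prop) (HH : lgraph V X -> {ffun VH -> V} -> Prop)
  : Prop :=
  forall G phi, HH G phi -> GG G /\ is_hom E le fH G phi.

Definition consistent (VH : finType) (E : rel VH) (X : Type)
  (le : X -> X -> Prop) (fH : seq VH -> option X) (V : choiceType)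
  (GG : lgraph V X -> Prop) (HH : lgraph V X -> {ffun VH -> V} -> Prop)
  : Prop :=
  (* CON1, restriction of the codomain *)
  (forall (G G' : lgraph V X) phi, HH G phi -> wf_lgraph G' ->
     induced G' G -> (forall x, phi x \in lverts G') ->
     is_hom E le fH G' phi /\ HH G' phi) /\
  (* CON1, extension of the codomain *)
  (forall (G G' : lgraph V X) phi, HH G phi -> GG G' -> induced G G' ->
     is_hom E le fH G' phi /\ HH G' phi) /\
  (* CON2 *)
  (forall (G1 G2 : lgraph V X) (iota : V -> V) phi,
     GG G1 -> GG G2 -> is_iso G1 G2 iota -> HH G1 phi ->
     HH G2 [ffun x => iota (phi x)]) /\
  (* CON3: chi is iota^{-1} o phi *)
  (forall (G1 G2 G1' : lgraph V X) (iota : V -> V) phi,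
     GG G1 -> GG G2 -> wf_lgraph G1' -> spanning_subgraph G1' G1 ->
     is_iso G2 G1' iota -> HH G1 phi -> is_hom E le fH G1' phi ->
     forall chi : {ffun VH -> V},
       (forall x, chi x \in lverts G2 /\ iota (chi x) = phi x) ->
       is_hom E le fH G2 chi /\ HH G2 chi).

Definition num_homs (VH : finType) (V : choiceType) (X : Type)
  (HH : lgraph V X -> {ffun VH -> V} -> Prop) (G : lgraph V X) (k : nat)
  : Prop :=
  exists S : {fset {ffun VH -> V}},
    (forall phi, phi \in S <-> HH G phi) /\ #|` S| = k.

Definition ex_val (VH : finType) (V : choiceType) (X : Type)
  (GG : lgraph V X -> Prop) (HH : lgraph V X -> {ffun VH -> V} -> Prop)
  (n e : nat) : Prop :=
  (exists G, [/\ GG G, #|` lverts G| = n & num_homs HH G e]) /\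
  (forall G k, GG G -> #|` lverts G| = n -> num_homs HH G k -> (k <= e)%N).

Definition separation (W : choiceType) (X : Type) (K : lgraph W X)
  (AB : {fset W} * {fset W}) : Prop :=
  AB.1 `|` AB.2 = lverts K /\
  (forall x y, x \in AB.1 `\` AB.2 -> y \in AB.2 `\` AB.1 -> ~~ ladj K x y).

Definition indep_coll (W : choiceType) (X : Type) (K : lgraph W X)
  (L : {fset ({fset W} * {fset W})}) : Prop :=
  (forall AB, AB \in L -> separation K AB /\ AB.1 `\` AB.2 != fset0) /\
  (forall AB CD, AB \in L -> CD \in L -> AB != CD ->
     AB.1 `<=` CD.2 /\ CD.1 `<=` AB.2).

Definition H_separation (VH : finType) (E : rel VH)
  (AB : {set VH} * {set VH}) : Prop :=
  AB.1 :|: AB.2 = setT /\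
  (forall x y, x \in AB.1 :\: AB.2 -> y \in AB.2 :\: AB.1 -> ~~ E x y).

Definition H_indep_coll (VH : finType) (E : rel VH)
  (L : {set ({set VH} * {set VH})}) : Prop :=
  (forall AB, AB \in L -> H_separation E AB /\ AB.1 :\: AB.2 != set0) /\
  (forall AB CD, AB \in L -> CD \in L -> AB != CD ->
     AB.1 \subset CD.2 /\ CD.1 \subset AB.2).

(* Duplication (K,fK) /\_w L.  Copy k (k < w) of a vertex v is (v,k), *)
(* except that the vertices of the core (the intersection of the B's) *)
(* are shared: their copies are all (v,0).  Convention: the           *)
(* intersection over the empty collection is empty.    *)
Definition dup_core (W : choiceType) (X : Type) (K : lgraph W X)
  (L : {fset ({fset W} * {fset W})}) : {fset W} :=
  [fset v in lverts K | (L != fset0) && all (fun AB => v \in AB.2) L].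

Definition dcopy (W : choiceType) (C : {fset W}) (k : nat) (v : W)
  : (W * nat)%type := (v, if v \in C then 0%N else k).

Definition dup_graph (W : choiceType) (X : Type) (K : lgraph W X)
  (L : {fset ({fset W} * {fset W})}) (w : nat) : lgraph (W * nat)%type X :=
  let C := dup_core K L in
  @LGraph (W * nat)%type X
    (\big[fsetU/fset0]_(k < w) [fset dcopy C k v | v in lverts K])
    (fun a b => ladj K a.1 b.1 &&
       [exists k : 'I_w, (a == dcopy C k a.1) && (b == dcopy C k b.1)])
    (fun m => if [exists k : 'I_w, map (dcopy C k) (map fst m) == m]
              then llab K (map fst m) else None).

Definition G_duplicable (V : choiceType) (X : Type) (GG : lgraph V X -> Prop)
  (K : lgraph V X) (L : {fset ({fset V} * {fset V})}) : Prop :=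
  forall N, exists k, (N < k)%N /\
    exists (G'' : lgraph V X) (iota : (V * nat)%type -> V),
      GG G'' /\ is_iso (dup_graph K L k) G'' iota.

Definition fimg (VH : finType) (V : choiceType) (phi : {ffun VH -> V})
  (S : {set VH}) : {fset V} := [fset phi x | x in enum S].

Definition cnbhd (V : choiceType) (X : Type) (G : lgraph V X) (S : {fset V})
  : {fset V} :=
  S `|` [fset y in lverts G | has (fun x => ladj G x y) S].

Definition img_sep (VH : finType) (V : choiceType) (X : Type)
  (G : lgraph V X) (phi : {ffun VH -> V}) (AB : {set VH} * {set VH})
  : ({fset V} * {fset V})%type :=
  (cnbhd G (fimg phi (AB.1 :\: AB.2)), lverts G `\` fimg phi (AB.1 :\: AB.2)).

Definition img_coll (VH : finType) (V : choiceType) (X : Type)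
  (G : lgraph V X) (phi : {ffun VH -> V}) (L : {set ({set VH} * {set VH})})
  : {fset ({fset V} * {fset V})} :=
  [fset img_sep G phi AB | AB in enum L].

Definition GH_duplicable (VH : finType) (V : choiceType) (X : Type)
  (GG : lgraph V X -> Prop) (HH : lgraph V X -> {ffun VH -> V} -> Prop)
  (L : {set ({set VH} * {set VH})}) : Prop :=
  exists (G : lgraph V X) (phi : {ffun VH -> V}),
    [/\ HH G phi,
        (forall y, y \in lverts G -> exists x, phi x = y),
        (forall AB, AB \in L ->
           fimg phi (AB.1 :\: AB.2) `&` fimg phi AB.2 = fset0),
        indep_coll G (img_coll G phi L) &
        #|` img_coll G phi L| = #|L| /\ G_duplicable GG G (img_coll G phi L)].

Definition is_dup (VH : finType) (E : rel VH) (V : choiceType) (X : Type)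
  (GG : lgraph V X -> Prop) (HH : lgraph V X -> {ffun VH -> V} -> Prop)
  (d : nat) : Prop :=
  (exists L, [/\ H_indep_coll E L, GH_duplicable GG HH L & #|L| = d]) /\
  (forall L, H_indep_coll E L -> GH_duplicable GG HH L -> (#|L| <= d)%N).

(* Main.v *)
Require Import Defs.
From Stdlib Require Import Reals ClassicalEpsilon.
From mathcomp Require Import all_boot.
From mathcomp Require Import finmap.

Set Implicit Arguments.
Unset Strict Implicit.
Unset Printing Implicit Defensive.
Local Open Scope fset_scope.


Definition pb (P : Prop) : bool :=
  if excluded_middle_informative P then true else false.
Lemma pbP (P : Prop) : reflect P (pb P).
Proof. rewrite /pb; case: excluded_middle_informative => h; by constructor. Qed.

Lemma sz_enum (T : finType) (p : finmempred T) :
  size (enum_finmem p) = #|[pred x | in_mem x p]|.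
Proof.
rewrite -(card_uniqP (enum_finmem_uniq p)); apply: eq_card => x.
by rewrite enum_finmemE inE.
Qed.
Lemma card_imfT_le (T : finType) (K: choiceType) (f : T -> K) :
  (#|` [fset f x | x : T]| <= #|T|)%N.
Proof. apply: leq_trans (leq_imfset_card _ _ _) _. rewrite sz_enum. by apply: max_card. Qed.
Lemma card_imfT (T : finType) (K: choiceType) (f : T -> K) :
  injective f -> (#|` [fset f x | x : T]| = #|T|)%N.
Proof. move=> fi. rewrite card_imfset // sz_enum. apply: eq_card => x. by rewrite !inE. Qed.

Definition sel (V : choiceType) (L : {fset ({fset V} * {fset V})}) (w : nat)
  (s : {ffun L -> 'I_w}) (v : V) : nat :=
  if [pick P : L | v \in (val P).1 `\` (val P).2] is Some P then val (s P) else 0.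


Lemma part_unique (V : choiceType) (X : Type) (G : lgraph V X) (L : {fset ({fset V} * {fset V})}) P Q x :
  indep_coll G L -> P \in L -> Q \in L ->
  x \in P.1 `\` P.2 -> x \in Q.1 `\` Q.2 -> P = Q.
Proof.
move=> [_ ind] PL QL; case: (eqVneq P Q) => // nPQ.
have [s1 _] := ind P Q PL QL nPQ.
rewrite !in_fsetD => /andP[_ xP1] /andP[xQ2 _].
by move: (fsubsetP s1 x xP1); rewrite (negbTE xQ2).
Qed.

Lemma part_adj (V : choiceType) (X : Type) (G : lgraph V X) (L : {fset ({fset V} * {fset V})}) P Q x y :
  wf_lgraph G -> indep_coll G L -> P \in L -> Q \in L ->
  x \in P.1 `\` P.2 -> y \in Q.1 `\` Q.2 -> ladj G x y -> P = Q.
Proof.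
move=> [sym _ _ _] [sep ind] PL QL; case: (eqVneq P Q) => // nPQ.
have [s1 s2] := ind P Q PL QL nPQ.
move=> xP yQ axy.
have xQ2 : x \in Q.2.
  by apply: (fsubsetP s1); move: xP; rewrite in_fsetD => /andP[].
have xQ1 : x \notin Q.1.
  apply/negP => /(fsubsetP s2); by move: xP; rewrite in_fsetD => /andP[/negbTE ->].
have [[_ sp] _] := sep Q QL.
have := sp y x yQ; rewrite in_fsetD xQ1 xQ2 => /(_ isT).
by rewrite sym axy.
Qed.

Lemma sel_part (V : choiceType) (X : Type) (G : lgraph V X) (L : {fset ({fset V} * {fset V})}) w
  (s : {ffun L -> 'I_w}) (P : L) x :
  indep_coll G L -> x \in (val P).1 `\` (val P).2 -> sel s x = val (s P).
Proof.
move=> ind xP; rewrite /sel; case: pickP => [P' xP'|]; last by move=> /(_ P); rewrite xP.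
suff -> : P' = P by [].
apply: val_inj; exact: (part_unique ind (fsvalP P') (fsvalP P) xP' xP).
Qed.

Lemma sel_none (V : choiceType) (L : {fset ({fset V} * {fset V})}) w (s : {ffun L -> 'I_w}) (x : V) :
  (forall P : L, x \notin (val P).1 `\` (val P).2) -> sel s x = 0.
Proof. move=> h; rewrite /sel; case: pickP => // P; by rewrite (negbTE (h P)). Qed.

Lemma sel_lt (V : choiceType) (L : {fset ({fset V} * {fset V})}) w (s : {ffun L -> 'I_w}) (x : V) :
  (0 < w)%N -> (sel s x < w)%N.
Proof. move=> w0; rewrite /sel; case: pickP => // P _; exact: ltn_ord. Qed.

Lemma noncore (V : choiceType) (X : Type) (G : lgraph V X) (L : {fset ({fset V} * {fset V})}) x :
  indep_coll G L -> x \in lverts G -> x \notin dup_core G L -> L != fset0 ->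
  exists P : L, x \in (val P).1 `\` (val P).2.
Proof.
move=> [sep _] xG; rewrite /dup_core !inE xG /= => h Ln0; rewrite Ln0 /= in h.
have [P PL xP2] : exists2 P, P \in L & x \notin P.2.
  have h2 : ~~ all (fun AB : {fset V} * {fset V} => x \in AB.2) L := h.
  by apply/allPn.
have [[un _] _] := sep P PL.
exists [` PL] => /=; rewrite in_fsetD xP2 /=.
by move: xG; rewrite -un in_fsetU (negbTE xP2) orbF.
Qed.

Lemma part_noncore (V : choiceType) (X : Type) (G : lgraph V X) (L : {fset ({fset V} * {fset V})}) P x :
  P \in L -> x \in P.1 `\` P.2 -> x \notin dup_core G L.
Proof.
move=> PL; rewrite in_fsetD => /andP[xP2 _]; rewrite /dup_core !inE.
apply/negP => /andP[_ /andP[_ H]]; have H2 : all (fun AB : {fset V} * {fset V} => x \in AB.2) L := H. have := allP H2 P PL. by rewrite (negbTE xP2).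
Qed.

Lemma dup_in (V : choiceType) (X : Type) (G : lgraph V X)
  (L : {fset ({fset V} * {fset V})}) w k v :
  v \in lverts G -> (k < w)%N -> dcopy (dup_core G L) k v \in lverts (dup_graph G L w).
Proof.
move=> vG kw; rewrite /dup_graph /=.
apply/bigfcupP; exists (Ordinal kw); first by rewrite mem_index_enum.
by apply/imfsetP; exists v.
Qed.

Lemma dup_out (V : choiceType) (X : Type) (G : lgraph V X)
  (L : {fset ({fset V} * {fset V})}) w a :
  a \in lverts (dup_graph G L w) ->
  a.1 \in lverts G /\ exists2 k, (k < w)%N & a = dcopy (dup_core G L) k a.1.
Proof.
rewrite /dup_graph /= => /bigfcupP [k _ /imfsetP [v vG ->]] /=.
split => //; exists k => //; exact: ltn_ord.
Qed.

Lemma dcopy_inj2 (V : choiceType) (C : {fset V}) k j x :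
  x \notin C -> dcopy C k x = dcopy C j x -> k = j.
Proof. by rewrite /dcopy => /negbTE -> [] . Qed.

Lemma clique_copy (V : choiceType) (X : Type) (G : lgraph V X)
  (L : {fset ({fset V} * {fset V})}) w (s : {ffun L -> 'I_w}) (m : seq V) :
  wf_lgraph G -> indep_coll G L -> (0 < w)%N ->
  all (fun x => x \in lverts G) m ->
  (forall x y, x \in m -> y \in m -> x != y -> ladj G x y) ->
  exists k : 'I_w, forall x, x \in m ->
    dcopy (dup_core G L) (sel s x) x = dcopy (dup_core G L) k x.
Proof.
move=> wf ind w0 allm cl.
case: (boolP (has (fun x => [exists P : L, x \in (val P).1 `\` (val P).2]) m)).
- move=> /hasP [x0 x0m /existsP [P0 x0P0]].
  exists (s P0) => x xm.
  rewrite /dcopy; case: (boolP (x \in dup_core G L)) => // xC.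
  have Ln0 : L != fset0 by apply/fset0Pn; exists (val P0); exact: fsvalP.
  have xG : x \in lverts G by exact: (allP allm).
  have [P xP] := noncore ind xG xC Ln0.
  rewrite (sel_part s ind xP); suff -> : P = P0 by [].
  apply: val_inj; case: (eqVneq x x0) => [exx0|nx].
    by apply: (part_unique ind (fsvalP P) (fsvalP P0) xP); rewrite exx0.
  exact: (part_adj wf ind (fsvalP P) (fsvalP P0) xP x0P0 (cl x x0 xm x0m nx)).
- move=> /hasPn hn; exists (Ordinal w0) => x xm.
  rewrite (@sel_none _ _ _ s x) //= => P; apply/negP => xP.
  by move: (hn x xm) => /existsP; apply; exists P.
Qed.

Lemma mixed (VH : finType) (E : rel VH) (X : Type) (le : X -> X -> Prop)
  (fH : seq VH -> option X)
  (V : choiceType) (GG : lgraph V X -> Prop)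
  (HH : lgraph V X -> {ffun VH -> V} -> Prop)
  (G : lgraph V X) (phi : {ffun VH -> V}) (L : {fset ({fset V} * {fset V})})
  w (G'' : lgraph V X) (iota : (V * nat)%type -> V) (s : {ffun L -> 'I_w}) :
  hereditary_class GG -> consistent E le fH GG HH -> HH G phi -> GG G ->
  indep_coll G L -> (0 < w)%N -> GG G'' -> is_iso (dup_graph G L w) G'' iota ->
  HH G'' [ffun x => iota (dcopy (dup_core G L) (sel s (phi x)) (phi x))].
Proof.
move=> [hcl hind] [_ [con1e [con2 _]]] HG GGG ind w0 GG'' iso.
have [wf lg] := hcl G GGG.
have [wf'' _] := hcl G'' GG''.
case: iso => [iinj imap isurj iadj [ilab1 ilab2]].
set C := dup_core G L.
pose g v := dcopy C (sel s v) v.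
pose f v := iota (g v).
have gin : forall v, v \in lverts G -> g v \in lverts (dup_graph G L w).
  by move=> v vG; apply: dup_in => //; apply: sel_lt.
pose Vs := [fset f v | v in lverts G].
have fVs : forall v, v \in lverts G -> f v \in Vs.
  by move=> v vG; apply/imfsetP; exists v.
pose Gs := @LGraph V X Vs (fun a b => [&& ladj G'' a b, a \in Vs & b \in Vs])
  (fun m => if all (fun a => a \in Vs) m then llab G'' m else None).
have wfs : wf_lgraph Gs.
  case: wf'' => sy ir _ lb; split => /=.
  - move=> a b; rewrite sy; by case: (a \in Vs); case: (b \in Vs); rewrite ?andbF.
  - by move=> a; rewrite ir.
  - by move=> a b /and3P [_ -> ->].
  - move=> m; case: ifP => // al /lb [u _]; by split.
have inds : induced Gs G''.
  split => /=.
  - apply/fsubsetP => y /imfsetP [v vG ->]; exact: imap (gin v vG).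
  - by move=> x y xV yV; rewrite xV yV !andbT.
  - by move=> m; case: ifP.
  - by move=> m al _; rewrite al.
have GGs : GG Gs := hind G'' Gs GG'' wfs inds.
have fadj : forall x y, x \in lverts G -> y \in lverts G ->
    ladj G'' (f x) (f y) = ladj G x y.
  move=> x y xG yG; rewrite iadj ?gin //= /g /dcopy /=.
  case: (boolP (ladj G x y)) => axy //=; apply/existsP.
  have alxy : all (fun a => a \in lverts G) [:: x; y] by rewrite /= xG yG.
  have cl : forall a b, a \in [:: x; y] -> b \in [:: x; y] -> a != b -> ladj G a b.
    case: wf => sy _ _ _.
    move=> a b; rewrite !inE => /orP [] /eqP -> /orP [] /eqP ->;
      by rewrite ?eqxx // => _; rewrite // sy.
  have [k hk] := @clique_copy _ _ G L w s [:: x; y] wf ind w0 alxy cl.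
  exists k; move: (hk x) (hk y); rewrite /dcopy !inE !eqxx orbT /=.
  by move=> /(_ isT) -> /(_ isT) ->; rewrite !eqxx.
have isoG : is_iso G Gs f.
  split => /=.
  - move=> x y xG yG e; have := iinj _ _ (gin x xG) (gin y yG) e.
    by move=> /(congr1 fst).
  - by move=> x xG; apply: fVs.
  - by move=> y /imfsetP [x xG ->]; exists x.
  - by move=> x y xG yG; rewrite !fVs // !andbT fadj.
  split.
  + move=> m lm.
    case: (wf) => _ _ _ /(_ m lm) [um am].
    have [k hk] := @clique_copy _ _ G L w s m wf ind w0 am (lg m lm).
    have e1 : map g m = map (dcopy C k) m by apply/eq_in_map.
    have efst : map fst (map g m) = m.
      by rewrite -map_comp (eq_map (g := id)) ?map_id.
    have labdup : llab (dup_graph G L w) (map g m) = llab G m.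
      rewrite /dup_graph /= efst; case: existsP => [//|]; case.
      by exists k; rewrite e1.
    have -> : map f m = map iota (map g m) by rewrite -map_comp.
    have -> : all (fun a => a \in Vs) (map iota (map g m)).
      apply/allP => y /mapP [a /mapP [x xm ->] ->]; apply: fVs.
      exact: (allP am).
    by rewrite ilab1 labdup.
  + move=> m' /=; case: ifP => // al /ilab2 [m0 [am0 em0 ln0]].
    exists (map fst m0); split.
    * apply/allP => v /mapP [a am ->]; exact: (dup_out (allP am0 a am)).1.
    * rewrite -em0 -map_comp; apply/eq_in_map => a am /=.
      have aD := allP am0 a am.
      have : iota a \in Vs by apply: (allP al); rewrite -em0; exact: map_f.
      move=> /imfsetP [v vG ev].
      by rewrite (iinj _ _ aD (gin v vG) ev).
    * by move: ln0; rewrite /dup_graph /=; case: ifP.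
have HGs := con2 G Gs f phi GGG GGs isoG HG.
have [_ H''] := con1e Gs G'' _ HGs GG'' inds.
exact: H''.
Qed.

Definition FF (VH : finType) (V : choiceType) (A : {fset V}) : {fset {ffun VH -> V}} :=
  [fset [ffun x => val ((g : {ffun VH -> A}) x)] | g : {ffun VH -> A}].

Lemma FF_mem (VH : finType) (V : choiceType) (A : {fset V}) (phi : {ffun VH -> V}) :
  (forall x, phi x \in A) -> phi \in FF VH A.
Proof.
move=> h; apply/imfsetP; exists [ffun x => [` h x]] => //.
by apply/ffunP => x; rewrite !ffunE.
Qed.

Lemma FF_card (VH : finType) (V : choiceType) (A : {fset V}) :
  (#|` FF VH A| <= #|` A| ^ #|VH|)%N.
Proof. apply: leq_trans (card_imfT_le _) _. by rewrite card_ffun cardfE. Qed.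

Lemma homs_S (VH : finType) (E : rel VH) (X : Type) (le : X -> X -> Prop)
  (fH : seq VH -> option X) (V : choiceType) (GG : lgraph V X -> Prop)
  (HH : lgraph V X -> {ffun VH -> V} -> Prop) (G : lgraph V X) :
  hom_set E le fH GG HH ->
  exists S : {fset {ffun VH -> V}}, forall phi, phi \in S <-> HH G phi.
Proof.
move=> hs; exists [fset phi in FF VH (lverts G) | pb (HH G phi)] => phi.
rewrite !inE; split.
- by move=> /andP [_ /pbP].
- move=> h; have [_ [hm _ _]] := hs G phi h.
  by rewrite FF_mem //=; apply/pbP.
Qed.

Lemma num_bound (VH : finType) (E : rel VH) (X : Type) (le : X -> X -> Prop)
  (fH : seq VH -> option X) (V : choiceType) (GG : lgraph V X -> Prop)
  (HH : lgraph V X -> {ffun VH -> V} -> Prop) (G : lgraph V X) k :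
  hom_set E le fH GG HH -> num_homs HH G k -> (k <= #|` lverts G| ^ #|VH|)%N.
Proof.
move=> hs [S [HS <-]]; apply: leq_trans (FF_card VH (lverts G)).
apply: fsubset_leq_card; apply/fsubsetP => phi /HS h.
by have [_ [hm _ _]] := hs G phi h; apply: FF_mem.
Qed.

Lemma ex_exists (VH : finType) (E : rel VH) (X : Type) (le : X -> X -> Prop)
  (fH : seq VH -> option X) (V : choiceType) (GG : lgraph V X -> Prop)
  (HH : lgraph V X -> {ffun VH -> V} -> Prop) (G0 : lgraph V X) n k0 :
  hom_set E le fH GG HH -> GG G0 -> #|` lverts G0| = n -> num_homs HH G0 k0 ->
  exists e, ex_val GG HH n e /\ (k0 <= e)%N.
Proof.
move=> hs GG0 n0 nh0.
pose P k := pb (exists G, [/\ GG G, #|` lverts G| = n & num_homs HH G k]).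
have exP : exists k, P k by exists k0; apply/pbP; exists G0.
have ubP : forall k, P k -> (k <= n ^ #|VH|)%N.
  move=> k /pbP [G [_ <- nh]]; exact: num_bound hs nh.
case: (ex_maxnP exP ubP) => e /pbP [G [GGG nG nhG]] mx.
exists e; split; last by apply: mx; apply/pbP; exists G0.
split; first by exists G.
move=> G' k GG' nG' nh'; apply: mx; apply/pbP; by exists G'.
Qed.

Lemma d_bound (VH : finType) (E : rel VH) (L : {set ({set VH} * {set VH})}) :
  H_indep_coll E L -> (#|L| <= #|VH|)%N.
Proof.
move=> [h1 h2].
case: (boolP (L == set0)) => [/eqP -> |]; first by rewrite cards0.
move=> /set0Pn [AB0 AB0L].
have [_ /set0Pn [x0 _]] := h1 AB0 AB0L.
pose g (AB : {set VH} * {set VH}) := odflt x0 [pick x in AB.1 :\: AB.2].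
have gin : forall AB, AB \in L -> g AB \in AB.1 :\: AB.2.
  move=> AB ABL; rewrite /g; case: pickP => [x -> //|none].
  have [_ /set0Pn [y yin]] := h1 AB ABL.
  by move: (none y); rewrite yin.
rewrite -(card_in_imset (f := g)); first exact: max_card.
move=> AB CD ABL CDL e; apply/eqP; apply/negPn/negP => nAC.
have [s1 _] := h2 AB CD ABL CDL nAC.
have := gin AB ABL; have := gin CD CDL; rewrite -e !inE.
move=> /andP [nD _] /andP [_ inA].
by move: (subsetP s1 _ inA); rewrite (negbTE nD).
Qed.

Lemma key (VH : finType) (E : rel VH) (X : Type) (le : X -> X -> Prop)
  (fH : seq VH -> option X) (V : choiceType) (GG : lgraph V X -> Prop)
  (HH : lgraph V X -> {ffun VH -> V} -> Prop) (G : lgraph V X)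
  (phi : {ffun VH -> V}) (L : {fset ({fset V} * {fset V})}) N :
  hereditary_class GG -> hom_set E le fH GG HH -> consistent E le fH GG HH ->
  (0 < #|VH|)%N -> HH G phi -> (forall y, y \in lverts G -> exists x, phi x = y) ->
  indep_coll G L -> G_duplicable GG G L ->
  exists n w e, [/\ (N < n)%N, (n <= w * #|VH|)%N, ex_val GG HH n e
                  & (w ^ #|` L| <= e)%N].
Proof.
move=> her hs con VH0 HG onto ind Gdup.
have [w [Nw [G'' [iota [GG'' iso]]]]] := Gdup N.
have w0 : (0 < w)%N by apply: leq_ltn_trans Nw.
have [GGG [phiG _ _]] := hs G phi HG.
have [wf _] := her.1 G GGG.
have iso' := iso; case: iso' => [iinj imap isurj _ _].
set C := dup_core G L.
have [S HS] := @homs_S VH E X le fH V GG HH G'' hs.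
set n := #|` lverts G''|.
have nh : num_homs HH G'' #|` S| by exists S.
have [e [exv Se]] := ex_exists hs GG'' (erefl n) nh.
exists n, w, e.
pose psi (s : {ffun L -> 'I_w}) :=
  [ffun x => iota (dcopy C (sel s (phi x)) (phi x))].
have psiS : forall s, psi s \in S.
  move=> s; apply/HS.
  exact: (@mixed VH E X le fH V GG HH G phi L w G'' iota s her con HG GGG ind w0 GG'' iso).
have partG : forall (P : {fset V} * {fset V}) v, P \in L -> v \in P.1 `\` P.2 -> v \in lverts G.
  move=> P v PL; rewrite in_fsetD => /andP [_ vP1].
  have [[un _] _] := ind.1 P PL; by rewrite -un in_fsetU vP1.
have psi_inj : injective psi.
  move=> s s' eq; apply/ffunP => P.
  have [_ /fset0Pn [v vP]] := ind.1 (val P) (fsvalP P).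
  have vG := partG _ _ (fsvalP P) vP.
  have [x phix] := onto v vG.
  have := congr1 (fun h : {ffun VH -> V} => h x) eq; rewrite /psi !ffunE phix.
  move=> /iinj e2; have := e2 (dup_in L vG (sel_lt s v w0)) (dup_in L vG (sel_lt s' v w0)).
  move=> /(dcopy_inj2 (@part_noncore V X G L _ _ (fsvalP P) vP)).
  rewrite !(sel_part _ ind vP); exact: val_inj.
have cnt : (w ^ #|` L| <= #|` S|)%N.
  have <- : #|` [fset psi s | s : {ffun L -> 'I_w}]| = w ^ #|` L|.
    by rewrite card_imfT // card_ffun card_ord cardfE.
  apply: fsubset_leq_card; apply/fsubsetP => y /imfsetP [s _ ->]; exact: psiS.
split.
- apply: leq_trans Nw _.
  have [u uG uC] : exists2 u, u \in lverts G & u \notin C.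
    case: (eqVneq L fset0) => [L0 | Ln0].
    + have [x0 _] := card_gt0P VH0.
      exists (phi x0) => //; by rewrite /C /dup_core !inE L0 eqxx /= andbF.
    + have [P PL] := fset0Pn _ Ln0.
      have [_ /fset0Pn [v vP]] := ind.1 P PL.
      exists v; [exact: partG vP | exact: (@part_noncore V X G L _ _ PL vP)].
  have <- : #|` [fset iota (dcopy C (val j) u) | j : 'I_w]| = w.
    rewrite card_imfT ?card_ord // => j j' /iinj e2.
    have := e2 (dup_in L uG (ltn_ord j)) (dup_in L uG (ltn_ord j')).
    by move=> /(dcopy_inj2 uC) /val_inj.
  apply: fsubset_leq_card; apply/fsubsetP => y /imfsetP [j _ ->].
  by apply: imap; apply: dup_in (ltn_ord j).
- have h1 : (n <= #|` lverts G| * w)%N.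
    apply: leq_trans
      (fsubset_leq_card (B := [fset iota (dcopy C (val p.2) (val p.1))
                            | p : (fset_sub_type (lverts G) * 'I_w)%type]) _) _.
      apply/fsubsetP => y /isurj [a aD <-].
      have [a1G [k kw ea]] := dup_out aD.
      apply/imfsetP; exists ([` a1G], Ordinal kw) => //=.
      by rewrite {1}ea.
    by apply: leq_trans (card_imfT_le _) _; rewrite card_prod cardfE card_ord.
  have h2 : (#|` lverts G| <= #|VH|)%N.
    apply: leq_trans (card_imfT_le phi).
    apply: fsubset_leq_card; apply/fsubsetP => y /onto [x <-].
    by apply/imfsetP; exists x.
  apply: leq_trans h1 _; rewrite mulnC; exact: leq_mul.
- exact: exv.
- exact: leq_trans cnt Se.
Qed.

Lemma INR_expn (n d : nat) : INR (expn n d) = pow (INR n) d.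
Proof.
elim: d => [|d IH]; first by rewrite expn0.
by rewrite expnS mult_INR IH /=.
Qed.

Lemma exp_mono (a b d : nat) : (a <= b)%N -> (a ^ d <= b ^ d)%N.
Proof. by case: d => [|d] // ab; rewrite leq_exp2r. Qed.

Theorem mainTheorem1 (VH : finType) (E : rel VH) :
  simple_graph E -> (0 < #|VH|)%N ->
  exists c : R, Rlt R0 c /\
  forall (X : Type) (le : X -> X -> Prop) (fH : seq VH -> option X)
         (V : choiceType) (GG : lgraph V X -> Prop)
         (HH : lgraph V X -> {ffun VH -> V} -> Prop),
    quasi_order le ->
    legal_H_labelling E fH ->
    hereditary_class GG ->
    hom_set E le fH GG HH ->
    consistent E le fH GG HH ->
    forall d : nat, is_dup E GG HH d ->
    forall N : nat, exists n : nat, (N < n)%N /\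
      exists e : nat, ex_val GG HH n e /\ Rle (Rmult c (pow (INR n) d)) (INR e).
Proof.
move=> _ VH0.
have K0 : (0 < #|VH| ^ #|VH|)%N by rewrite expn_gt0 VH0.
exists (Rinv (INR (#|VH| ^ #|VH|))); split.
  by apply: Rinv_0_lt_compat; apply: lt_0_INR; apply/ltP.
move=> X le fH V GG HH _ _ her hs con d [[L [Hind Gdup dL]] _] N.
case: Gdup => G [phi [HG onto _ indc [cardL Gd]]].
have [n [w [e [Nn nw exv we]]]] := key N her hs con VH0 HG onto indc Gd.
exists n; split => //; exists e; split => //.
rewrite cardL dL in we.
have dh : (d <= #|VH|)%N by rewrite -dL; exact: d_bound Hind.
have nat_ineq : (n ^ d <= e * #|VH| ^ #|VH|)%N.
  apply: leq_trans (exp_mono d nw) _.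
  rewrite expnMn; apply: leq_mul => //.
  exact: leq_pexp2l.
have Kpos : Rlt R0 (INR (#|VH| ^ #|VH|)) by apply: lt_0_INR; apply/ltP.
rewrite -INR_expn.
have h : Rle (INR (n ^ d)) (Rmult (INR e) (INR (#|VH| ^ #|VH|))).
  by rewrite -mult_INR; apply: le_INR; apply/leP.
apply: (Rmult_le_reg_l (INR (#|VH| ^ #|VH|))) => //.
rewrite -Rmult_assoc Rinv_r; last by apply: Rgt_not_eq.
by rewrite Rmult_1_l Rmult_comm.
Qed.
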